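(* Let $p > 3$ be a prime and let $n \in \mathbb{N}$ with $n \ge 2^{18} \log p$. Set $m := \lfloor 2^{12} \log p \rfloor$. Let $v \in \mathbb{Z}_p^n$. There exists $U \subset [n]$ with $|U| \le m$ such that $$|T_{8\ell}(v)| \le 2\, |F(v_U)| \qquad \text{and} \qquad F(v_U) \subset T_t(v),$$ where $\ell := 2^{-16} |v|$ and $t := 2^{-7} n$.
   Context: $\log$ is the natural logarithm. For $w \in \mathbb{Z}_p^r$, $|w|$ is the number of nonzero coordinates, and for $s \ge 0$ $$T_s(w) := \Big\{ k \in \mathbb{Z}_p : \sum_{i=1}^r \Big\| \frac{k \cdot w_i}{p} \Big\|^2 \le s \Big\}, \qquad F(w) := T_{\log p}(w),$$ where $k \cdot w_i \in \mathbb{Z}$ is the product of the representatives of $k$ and $w_i$ in $\{0,\ldots,p-1\}$, and $\|x\|$ is the distance from $x$ to the nearest integer. For $U \subset [n]$, $v_U \in \mathbb{Z}_p^{|U|}$ is the restriction of $v$ to the coordinates in $U$. *)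

(* Defs.v *)
From HB Require Import structures.
From mathcomp Require Import all_boot all_order all_algebra.
From mathcomp Require Import reals exp.
Set Implicit Arguments. Unset Strict Implicit. Unset Printing Implicit Defensive.
Import Order.TTheory GRing.Theory Num.Theory.
Local Open Scope ring_scope.

(* Z_p is represented by 'I_p = {0,...,p-1}, i.e. by the canonical
   representatives; a vector of Z_p^I (I a finite index type) is a
   function I -> 'I_p. *)

Definition dnint (R : realType) (x : R) : R :=
  Num.min (x - (Num.floor x)%:~R) ((Num.ceil x)%:~R - x).

Definition wt (p : nat) (I : finType) (w : I -> 'I_p) : nat :=
  #|[set i | val (w i) != 0%N]|.

Definition Tset (R : realType) (p : nat) (I : finType) (w : I -> 'I_p) (s : R)
  : {set 'I_p} :=
  [set k : 'I_p | \sum_(i : I) (dnint ((val k * val (w i))%:R / p%:R)) ^+ 2 <= s].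

Definition Fset (R : realType) (p : nat) (I : finType) (w : I -> 'I_p)
  : {set 'I_p} := Tset w (ln (p%:R : R)).

Definition restr (p n : nat) (v : 'I_n -> 'I_p) (U : {set 'I_n})
  : {i : 'I_n | i \in U} -> 'I_p := fun i => v (val i).
Arguments restr {p n} v U _.

(* Main.v *)
Require Import Defs.
From HB Require Import structures.
From mathcomp Require Import all_boot all_order all_algebra.
From mathcomp Require Import reals sequences exp ring lra.
Import Order.TTheory GRing.Theory Num.Theory.
Set Implicit Arguments. Unset Strict Implicit. Unset Printing Implicit Defensive.
Local Open Scope ring_scope.
Section S.
Variable R : realType.
Lemma sum_ffun_prod m b (h : 'I_m -> 'I_b -> R) :
  \sum_(c : {ffun 'I_m -> 'I_b}) \prod_j h j (c j) = \prod_j \sum_r h j r.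
Proof. by rewrite bigA_distr_bigA. Qed.

Lemma sum_ffun_lin m b (g : 'I_b -> R) (j : 'I_m) :
  b%:R * \sum_(c : {ffun 'I_m -> 'I_b}) g (c j) = (b%:R ^+ m) * \sum_r g r.
Proof.
have E := @sum_ffun_prod m b (fun j' r => if j' == j then g r else 1).
have E1 : \prod_(i < m) \sum_(r < b) (if i == j then g r else 1)
   = (\sum_r g r) * \prod_(i < m | i != j) (b%:R : R).
  rewrite (bigD1 j) //= eqxx; congr (_ * _).
  apply: eq_bigr => i /negbTE ->; by rewrite sumr_const card_ord.
have E2 : \sum_(c : {ffun 'I_m -> 'I_b}) \prod_j0 (if j0 == j then g (c j0) else 1)
   = \sum_(c : {ffun 'I_m -> 'I_b}) g (c j).
  apply: eq_bigr => c _; rewrite (bigD1 j) //= eqxx big1 ?mulr1 // => i /negbTE -> //.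
rewrite -E2 E E1.
rewrite [b%:R ^+ m](_ : _ = \prod_(i < m) (b%:R : R)); last by rewrite prodr_const card_ord.
by rewrite mulrCA [in RHS]mulrC [in RHS](bigD1 j).
Qed.

Lemma blk_lt m b n (hmb : (m * b <= n)%N) (j : 'I_m) (r : 'I_b) : (j * b + r < n)%N.
Proof.
apply: leq_trans hmb; apply: (@leq_trans (j.+1 * b)).
  by rewrite mulSnr ltn_add2l.
by rewrite leq_mul2r ltn_ord orbT.
Qed.

Definition idx m b n (hmb : (m * b <= n)%N) (j : 'I_m) (r : 'I_b) : 'I_n :=
  Ordinal (blk_lt hmb j r).

Lemma idx_inj m b n (hmb : (m * b <= n)%N) j1 r1 j2 r2 :
  idx hmb j1 r1 = idx hmb j2 r2 -> j1 = j2 /\ r1 = r2.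
Proof.
move=> /(congr1 val) /= E.
have hb : (0 < b)%N by case: (b) r1 {E} => [[]|].
have h1 : ((j1 * b + r1) %/ b = j1)%N by rewrite divnMDl // divn_small ?addn0.
have h2 : ((j2 * b + r2) %/ b = j2)%N by rewrite divnMDl // divn_small ?addn0.
have e1 : ((j1 * b + r1) %% b = r1)%N by rewrite modnMDl modn_small.
have e2 : ((j2 * b + r2) %% b = r2)%N by rewrite modnMDl modn_small.
split; apply: val_inj => /=.
  by rewrite -h1 -h2 E.
by rewrite -e1 -e2 E.
Qed.

Lemma sum_blk m b n (hmb : (m * b <= n)%N) (F : 'I_n -> R) :
  \sum_j \sum_r F (idx hmb j r) =
  \sum_(i in [set idx hmb u.1 u.2 | u : 'I_m * 'I_b]) F i.
Proof.
rewrite pair_big /= big_imset //=.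
by move=> [j1 r1] [j2 r2] _ _ /= /idx_inj [-> ->].
Qed.

Lemma card_blk m b n (hmb : (m * b <= n)%N) :
  #|[set idx hmb u.1 u.2 | u : 'I_m * 'I_b]| = (m * b)%N.
Proof.
rewrite card_imset ?card_prod ?card_ord //.
by move=> [j1 r1] [j2 r2] /= /idx_inj [-> ->].
Qed.

Lemma sum_blk_le m b n (hmb : (m * b <= n)%N) (F : 'I_n -> R) :
  (forall i, 0 <= F i) ->
  \sum_j \sum_r F (idx hmb j r) <= \sum_i F i.
Proof.
move=> F0; rewrite sum_blk [X in _ <= X](bigID (fun i => i \in [set idx hmb u.1 u.2 | u : 'I_m * 'I_b])) /=.
by rewrite lerDl sumr_ge0.
Qed.

Lemma sum_blk_ge m b n (hmb : (m * b <= n)%N) (F : 'I_n -> R) :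
  (forall i, 0 <= F i <= 1/4) ->
  \sum_i F i - (n%:R - (m * b)%:R) / 4 <= \sum_j \sum_r F (idx hmb j r).
Proof.
move=> F0; rewrite sum_blk (bigID (fun i => i \in [set idx hmb u.1 u.2 | u : 'I_m * 'I_b])) /=.
set A := [set idx hmb u.1 u.2 | u : 'I_m * 'I_b].
rewrite lerBlDr lerD2l.
apply: (le_trans (ler_sum _ (fun i _ => (proj2 (andP (F0 i)))))).
rewrite sumr_const.
have -> : #|[pred i | i \notin A]| = (n - m * b)%N.
  have E : (m * b + #|~: A| = n)%N.
    by rewrite -[in RHS](card_ord n) -(card_blk hmb) -/A cardsC.
  have -> : (n - m * b = #|~: A|)%N by rewrite -{1}E addKn.
  by apply: eq_card => i; rewrite !inE.
rewrite -[_ *+ (n - _)]mulr_natr natrB //; lra.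
Qed.

Lemma expR_m4 (x : R) : 0 <= x <= 1/4 -> expR (- (4 * x)) <= 1 - 2 * x.
Proof.
move=> /andP[x0 x1].
have h := expR_ge1Dx (4 * x).
have hp : 0 < expR (4 * x) by apply: expR_gt0.
rewrite expRN -[X in X <= _]mul1r ler_pdivrMr //.
apply: le_trans (_ : (1 - 2 * x) * (1 + 4 * x) <= _); first nra.
rewrite ler_wpM2l //; lra.
Qed.

Lemma one_sub_le_expR (y : R) : 1 - y <= expR (- y).
Proof. by have := expR_ge1Dx (- y); rewrite addrC. Qed.

Lemma ind_le_expR (x L : R) : x <= L -> 1 <= expR (4 * L - 4 * x).
Proof. move=> h; apply: le_trans (expR_ge1Dx _); lra. Qed.


Lemma key m b n p (hmb : (m * b <= n)%N) (hb : (0 < b)%N)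
  (f : 'I_n -> 'I_p -> R) (L th : R) (T : {set 'I_p}) :
  (forall i k, 0 <= f i k <= 1/4) ->
  0 < L ->
  (forall k, k \in T -> \sum_i f i k <= th) ->
  th <= 3/10 * (b%:R * L) ->
  15 * L * b%:R <= 2 * (n%:R / 128 - (n%:R - (m * b)%:R) / 4) ->
  p%:R * expR (- (11 * L)) <= 1/11 ->
  (0 < #|T|)%N ->
  exists c : {ffun 'I_m -> 'I_b},
    (#|T| <= 2 * #|[set k | (\sum_j f (idx hmb j (c j)) k <= L)%R]|)%N /\
    forall k, \sum_j f (idx hmb j (c j)) k <= L -> \sum_i f i k <= n%:R / 128.
Proof.
move=> f01 L0 hT hth h15 h11 T0.
pose SU (c : {ffun 'I_m -> 'I_b}) (k : 'I_p) : R := (\sum_j f (idx hmb j (c j)) k)%R.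
pose S (k : 'I_p) : R := (\sum_i f i k)%R.
pose P (k : 'I_p) : R := (\sum_j \sum_r f (idx hmb j r) k)%R.
pose N : R := b%:R ^+ m.
have hbR : 0 < b%:R :> R by rewrite ltr0n.
have N0 : 0 < N by rewrite exprn_gt0.
have f0 i k : 0 <= f i k by case/andP: (f01 i k).
have SU0 c k : 0 <= SU c k by apply: sumr_ge0 => j _.
have hN : \sum_(c : {ffun 'I_m -> 'I_b}) (1 : R) = N.
  by rewrite sumr_const card_ffun !card_ord natrX.
have lin k : b%:R * \sum_c SU c k = N * P k.
  rewrite /SU exchange_big /= mulr_sumr /P mulr_sumr; apply: eq_bigr => j _.
  exact: (sum_ffun_lin (fun r => f (idx hmb j r) k) j).
have PS k : P k <= S k by apply: sum_blk_le.
have PS2 k : S k - (n%:R - (m * b)%:R) / 4 <= P k by apply: sum_blk_ge.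
pose bad2 (c : {ffun 'I_m -> 'I_b}) : R :=
  (\sum_(k in T) (if SU c k <= L then 0 else 1))%R.
have B2 : \sum_c bad2 c <= 3/10 * N * #|T|%:R.
  rewrite /bad2 exchange_big /= mulr_natr -sumr_const.
  apply: ler_sum => k kT.
  apply: (@le_trans _ _ (\sum_c SU c k / L)).
    apply: ler_sum => c _; case: ifP => h; first by rewrite divr_ge0 // ltW.
    by rewrite ler_pdivlMr // mul1r; rewrite leNgt; apply: contraFN h => /ltW ->.
  rewrite -mulr_suml.
  have E : \sum_c SU c k = N * P k / b%:R.
    by rewrite -lin mulrAC divff ?mul1r // gt_eqF.
  rewrite E ler_pdivrMr // ler_pdivrMr //.
  have : P k <= 3/10 * (b%:R * L) by apply: le_trans (PS k) (le_trans (hT k kT) hth).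
  nra.
pose bad3 (c : {ffun 'I_m -> 'I_b}) : R :=
  (\sum_k (if (n%:R / 128 < S k) && (SU c k <= L) then 1 else 0))%R.
have B3 : \sum_c bad3 c <= N / 11.
  rewrite /bad3 exchange_big /=.
  apply: (@le_trans _ _ (\sum_(k : 'I_p) N * expR (- (11 * L)))).
    apply: ler_sum => k _.
    case: (ltrP (n%:R / 128) (S k)) => hk /=; last first.
      by rewrite big1 ?mulr_ge0 ?expR_ge0 // ltW.
    apply: (@le_trans _ _ (\sum_c expR (4 * L - 4 * SU c k))).
      by apply: ler_sum => c _; case: ifP => h; [exact: ind_le_expR | exact: expR_ge0].
    have E1 c : expR (4 * L - 4 * SU c k) =
        expR (4 * L) * \prod_j expR (- (4 * f (idx hmb j (c j)) k)).
      by rewrite expRD -expR_sum /SU mulr_sumr -sumrN.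
    under eq_bigr do rewrite E1.
    rewrite -mulr_sumr (sum_ffun_prod (fun j r => expR (- (4 * f (idx hmb j r) k)))).
    apply: (@le_trans _ _ (expR (4 * L) *
       \prod_j (b%:R * expR (- (2 / b%:R * \sum_r f (idx hmb j r) k))))).
      rewrite ler_wpM2l ?expR_ge0 //; apply: ler_prod => j _; apply/andP; split.
        by apply: sumr_ge0 => r _; exact: expR_ge0.
      apply: (@le_trans _ _ (\sum_r (1 - 2 * f (idx hmb j r) k))).
        by apply: ler_sum => r _; apply: expR_m4.
      rewrite sumrB -mulr_sumr.
      set s := \sum_r f (idx hmb j r) k.
      have h := one_sub_le_expR (2 / b%:R * s).
      have e : b%:R * (2 / b%:R * s) = 2 * s.
        by field; rewrite gt_eqF.
      apply: le_trans (ler_wpM2l (ltW hbR) h).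
      by rewrite mulrBr mulr1 e sumr_const card_ord.
    rewrite big_split /= prodr_const card_ord -expR_sum sumrN -mulr_sumr -/N.
    rewrite mulrCA ler_pM2l // -expRD ler_expR.
    have h2 : 15 * L * b%:R <= 2 * P k.
      apply: le_trans h15 _; have := PS2 k; lra.
    have h3 : 15 * L <= 2 / b%:R * P k.
      by rewrite mulrAC ler_pdivlMr.
    move: h3; rewrite /P; lra.
  rewrite sumr_const card_ord -[_ *+ p]mulr_natr -mulrA ler_pM2l // mulrC.
  by move: h11; rewrite mul1r.
pose Z c := bad2 c + #|T|%:R * bad3 c.
have T0R : 0 < #|T|%:R :> R by rewrite ltr0n.
have BZ : \sum_c Z c < \sum_(c : {ffun 'I_m -> 'I_b}) (#|T|%:R / 2).
  have hN' : (#|{: {ffun 'I_m -> 'I_b}}|%:R : R) = N by rewrite -hN sumr_const.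
  rewrite [X in _ < X]sumr_const -[_ *+ _]mulr_natr hN' big_split /= -mulr_sumr.
  have := ler_wpM2l (ltW T0R) B3.
  nra.
have [c Hc] : exists c, Z c < #|T|%:R / 2.
  case: (boolP [exists c, Z c < #|T|%:R / 2]) => [/existsP [c Hc]|/existsPn H].
    by exists c.
  exfalso; move: BZ; apply/negP; rewrite -leNgt; apply: ler_sum => c _.
  by have := H c; rewrite -leNgt.
have b20 : 0 <= bad2 c by apply: sumr_ge0 => k _; case: ifP.
have b30 : 0 <= bad3 c by apply: sumr_ge0 => k _; case: ifP.
pose B := [set k | SU c k <= L].
exists c; split; last first.
  move=> k hk; rewrite leNgt; apply/negP => hk2.
  have : 1 <= bad3 c.
    rewrite /bad3 (bigD1 k) //= hk2 hk /= lerDl.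
    by apply: sumr_ge0 => i _; case: ifP.
  move: Hc; rewrite /Z; nra.
have E2 : bad2 c = #|T :\: B|%:R.
  rewrite /bad2 big_mkcond -sum1_card natr_sum [RHS]big_mkcond /=.
  apply: eq_bigr => k _; rewrite !inE.
  by case: (k \in T); case: (SU c k <= L).
have EC := cardsID B T.
have CB : (#|T :&: B| <= #|B|)%N by apply/subset_leq_card/subsetIr.
rewrite -(ler_nat R) natrM.
have : (#|T :&: B|%:R : R) <= #|B|%:R by rewrite ler_nat.
have : (#|T|%:R : R) = #|T :&: B|%:R + #|T :\: B|%:R by rewrite -natrD EC.
move: Hc; rewrite /Z E2; nra.
Qed.

Lemma dnint_bnd (x : R) : 0 <= dnint x <= 1/2.
Proof.
rewrite /dnint.
have h1 := floor_le x.
have h2 := ceil_ge x.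
have h3 : (Num.ceil x)%:~R <= (Num.floor x)%:~R + 1 :> R.
  have : (Num.ceil x <= Num.floor x + 1)%R.
    by rewrite ceil_le_int; apply: ltW; apply: floorD1_gt.
  by rewrite -(ler_int R) intrD.
apply/andP; split.
  by rewrite le_min; apply/andP; split; lra.
rewrite ge_min; case: (lerP (x - (Num.floor x)%:~R) (1/2)) => //= h.
lra.
Qed.

Lemma dnint0 : dnint (0 : R) = 0.
Proof. by rewrite /dnint floor0 ceil0 subrr; case: leP. Qed.

Lemma ln_ge1 (p : nat) : (3 < p)%N -> 1 <= ln (p%:R : R).
Proof.
move=> hp.
have h := one_sub_le_expR (1/2).
have e0 : 0 < expR (1/2 : R) := expR_gt0 _.
have e1 : expR (1/2 : R) <= 2.
  move: h; rewrite expRN => h.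
  have := ler_wpM2r (ltW e0) h; rewrite mulVf ?gt_eqF //; lra.
have e2 : expR (1 : R) <= 4.
  have -> : (1 : R) = 1/2 + 1/2 by lra.
  rewrite expRD; nra.
have p4 : (4 : R) <= p%:R by rewrite (ler_nat R 4 p).
rewrite -[X in X <= _](expRK 1) ler_ln ?posrE ?expR_gt0 //; first lra.
by apply: lt_le_trans p4.
Qed.

Lemma sq_bnd (d : R) : 0 <= d <= 1/2 -> 0 <= d ^+ 2 <= 1/4.
Proof. move=> /andP [d0 d1]; apply/andP; split; first by rewrite exprn_ge0. rewrite expr2; nra. Qed.

Lemma num_b127 (L m b n : R) : 1 <= L -> 2048 * 128 * L <= n -> m <= 2048 * L ->
  0 < m -> n < (b + 1) * m -> 127 < b.
Proof.
move=> L1 hn hm m0 hlt.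
have h1 : 128 * m < (b + 1) * m by lra.
by move: h1; rewrite ltr_pM2r //; lra.
Qed.

Lemma num_th (L m b n w : R) : 1 <= L -> 2048 * 128 * L <= n -> m <= 2048 * L ->
  0 < m -> n < (b + 1) * m -> 127 < b -> w <= n ->
  8 * (w / (2048 * 32)) <= 3/10 * (b * L).
Proof.
move=> L1 hn hm m0 hlt b127 wn.
have h1 : (b + 1) * m <= (b + 1) * (2048 * L) by apply: ler_wpM2l => //; lra.
have h2 : 127 * L <= b * L by apply: ler_wpM2r; lra.
lra.
Qed.

Lemma num_15 (L m b n : R) : 1 <= L -> 2048 * 128 * L <= n -> m <= 2048 * L ->
  2048 * L - 1 < m -> 0 <= b -> m * b <= n -> n < (b + 1) * m ->
  15 * L * b <= 2 * (n / 128 - (n - m * b) / 4).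
Proof.
move=> L1 hn hm hm2 b0 hmb hlt.
have h1 : 2047 * L * b <= m * b by apply: ler_wpM2r => //; lra.
lra.
Qed.

Lemma num_x1 (L : R) : 1 <= L -> 1 <= 2048 * L. Proof. move=> h; lra. Qed.
Lemma num_mn (L m n : R) : 1 <= L -> 2048 * 128 * L <= n -> m <= 2048 * L -> m <= n.
Proof. move=> *; lra. Qed.
Lemma num_m1 (x m : R) : x < m + 1 -> x - 1 < m. Proof. move=> *; lra. Qed.
Lemma num_th0 (w : R) : 0 <= w -> 0 <= 8 * (w / (2048 * 32)). Proof. move=> *; lra. Qed.
Lemma num_11 (L P : R) : 1 <= L -> expR L = P -> P * expR (- (11 * L)) <= 1/11.
Proof.
move=> L1 <-.
rewrite -expRD (_ : L + - (11 * L) = - (10 * L)); last by lra.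
rewrite expRN -div1r ler_pdivrMr ?expR_gt0 //.
have := expR_ge1Dx (10 * L); lra.
Qed.
End S.

Unset Implicit Arguments.

Theorem lemma3p6 (R : realType) (p n : nat) (hp : prime p) (hp3 : (3 < p)%N)
  (hn : (2%:R : R) ^+ 18 * ln (p%:R : R) <= n%:R)
  (v : 'I_n -> 'I_p) :
  exists U : {set 'I_n},
    (#|U|%:Z <= Num.floor ((2%:R : R) ^+ 12 * ln (p%:R : R))) /\
    (#|Tset v (8 * ((wt v)%:R / (2%:R : R) ^+ 16))|
       <= 2 * #|Fset R (restr v U)|)%N /\
    Fset R (restr v U) \subset Tset v ((n%:R : R) / (2%:R : R) ^+ 7).
Proof.
have L1 : 1 <= ln (p%:R : R) := ln_ge1 R hp3.
have p0 : 0 < (p%:R : R) by rewrite ltr0n prime_gt0.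
have eL : expR (ln (p%:R : R)) = p%:R by rewrite lnK // posrE.
have e5 : (2%:R : R) ^+ 5 = 32 by rewrite -natrX.
have e7 : (2%:R : R) ^+ 7 = 128 by rewrite -natrX.
have e11 : (2%:R : R) ^+ 11 = 2048 by rewrite -natrX.
have e12 : (2%:R : R) ^+ 12 = 2 * 2048 by rewrite exprS e11.
have e16 : (2%:R : R) ^+ 16 = 2048 * 32 by rewrite -[16%N]/(11 + 5)%N exprD e11 e5.
have e18 : (2%:R : R) ^+ 18 = 2048 * 128 by rewrite -[18%N]/(11 + 7)%N exprD e11 e7.
rewrite e18 in hn; rewrite e12 e16 e7.
set L := ln (p%:R : R) in L1 eL hn *.
pose x : R := 2048 * L.
have x0 : 0 <= x by apply: le_trans (num_x1 L1).
pose m := Num.truncn x.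
have /andP [hm1 hm2] := truncn_itv x0.
rewrite -/m in hm1 hm2.
have m0 : (0 < m)%N by rewrite truncn_gt0; apply: num_x1.
have m0R : 0 < (m%:R : R) by rewrite ltr0n.
have mn : (m <= n)%N by rewrite -(ler_nat R); apply: num_mn L1 hn hm1.
pose b := (n %/ m)%N.
have hmb : (m * b <= n)%N by rewrite mulnC leq_trunc_div.
have hb : (0 < b)%N by rewrite divn_gt0.
have hlt : (n < b.+1 * m)%N by apply: ltn_ceil.
have hmbR : (m%:R : R) * b%:R <= n%:R by rewrite -natrM ler_nat.
have hltR : (n%:R : R) < (b%:R + 1) * m%:R by rewrite natr1 -natrM ltr_nat.
have hm2' : 2048 * L - 1 < (m%:R : R) by apply: num_m1; rewrite natr1.
rewrite /x in hm1.
pose f (i : 'I_n) (k : 'I_p) : R := dnint ((val k * val (v i))%:R / p%:R) ^+ 2.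
have f01 i k : 0 <= f i k <= 1/4.
  exact: sq_bnd (dnint_bnd _).
pose th : R := 8 * ((wt v)%:R / (2048 * 32)).
have wtn : (wt v <= n)%N.
  by rewrite /wt; apply: leq_trans (max_card _) _; rewrite card_ord.
have wtnR : ((wt v)%:R : R) <= n%:R by rewrite ler_nat.
have th0 : 0 <= th by apply: num_th0; apply: ler0n.
have b127 : 127 < (b%:R : R) by apply: (num_b127 L1 hn hm1 m0R hltR).
have hth : th <= 3/10 * (b%:R * L) by apply: (num_th L1 hn hm1 m0R hltR b127 wtnR).
have h15 : 15 * L * b%:R <= 2 * (n%:R / 128 - (n%:R - (m * b)%:R) / 4).
  by rewrite natrM; apply: (num_15 L1 hn hm1 hm2' (ler0n _ _) hmbR hltR).
have h11 : p%:R * expR (- (11 * L)) <= 1/11 by apply: num_11.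
have hp0 : (0 < p)%N by apply: prime_gt0.
have T0 : (0 < #|Tset v th|)%N.
  apply/card_gt0P; exists (Ordinal hp0); rewrite inE.
  by rewrite big1 // => i _; rewrite /= mul0n mul0r dnint0 expr0n.
have hT : forall k, k \in Tset v th -> \sum_i f i k <= th by move=> k; rewrite inE.
have [c [C2 C3]] := key hmb hb f01 (lt_le_trans ltr01 L1) hT hth h15 h11 T0.
pose U := [set idx hmb j (c j) | j : 'I_m].
have injU : {in [set: 'I_m] &, injective (fun j => idx hmb j (c j))}.
  by move=> j1 j2 _ _ /idx_inj [].
have hF : Fset R (restr v U) = [set k | \sum_j f (idx hmb j (c j)) k <= L].
  apply/setP => k; rewrite !inE -/L.
  have -> : \sum_(i : {i : 'I_n | i \in U})
      dnint ((val k * val (restr v U i))%:R / p%:R) ^+ 2 = \sum_(i in U) f i k.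
    by rewrite [RHS]big_sub.
  by rewrite big_imset //= => j1 j2 _ _ /idx_inj [].
exists U; split; last split.
- rewrite floor_ge_int.
  have cU : (#|U| <= m)%N by apply: leq_trans (leq_imset_card _ _) _; rewrite card_ord.
  have : (#|U|%:R : R) <= m%:R by rewrite ler_nat.
  move: hm1 L1; rewrite -[(#|U|%:Z)%:~R]/(#|U|%:R); clear; move=> *; lra.
- by rewrite hF.
- apply/subsetP => k; rewrite hF !inE => /C3.
  by rewrite /f.
Qed.
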